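(* Assume the setting described in the context. Consider Algorithm 2 with a deterministic rule for choosing $f$ in each inner iteration, and let $s\ge1$. Then: (a) for every $\tau\in\mathrm{BadPar}(s)$ the longest chain of $\tau$ has length exactly $s$; (b) the set $\mathrm{BadPar}(s)$ is valid.
   Context: Setting: $\Omega$ is a finite set and $F$ a finite set of flaws, each a nonempty subset of $\Omega$; $F_\sigma=\{f:\sigma\in f\}$. For $\sigma\in\Omega$ and $f\in F_\sigma$ there is a probability distribution $\rho(\cdot\mid f,\sigma)$ with support $A(f,\sigma)$. A walk is $\sigma_1\xrightarrow{w_1}\sigma_2\cdots\xrightarrow{w_t}\sigma_{t+1}$ with $w_i\in F_{\sigma_i}$ and $\sigma_{i+1}\in A(w_i,\sigma_i)$, with word $w_1\ldots w_t$. $\sim$ is a symmetric relation on $F$ (loops allowed), with $\Gamma(f)=\{g:f\sim g\}$, $\Gamma^+(f)=\Gamma(f)\cup\{f\}$ and $\Gamma^+(S)=\bigcup_{f\in S}\Gamma^+(f)$. It is assumed that for every step $\sigma\xrightarrow{f}\sigma'$, $F_{\sigma'}\subseteq(F_\sigma\setminus\{f\})\cup\Gamma(f)$. Write $f\cong g$ if $f\sim g$ or $f=g$. Algorithm 2 (with initial distribution $\omega^{\mathrm{init}}$). Sample $\sigma$ from $\omega^{\mathrm{init}}$. While $F_\sigma\neq\varnothing$, perform a round: $I:=\varnothing$; while $F_\sigma\setminus\Gamma^+(I)\ne\varnothing$, pick $f\in F_\sigma\setminus\Gamma^+(I)$ by the deterministic rule, sample $\sigma'$ from $\rho(\cdot\mid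 f,\sigma)$, set $\sigma\leftarrow\sigma'$ and $I\leftarrow I\cup\{f\}$. $\mathrm{BadPar}(s)$: for each execution (with positive probability) having at least $s$ rounds, take the walk consisting of all steps of the first $s-1$ rounds followed by the first step of round $s$. $\mathrm{BadPar}(s)$ is the set of all such walks. A chain of a walk with word $w_1\ldots w_t$ is a subsequence $u_1\ldots u_m$ of $w_1\ldots w_t$ with $u_i\cong u_{i+1}$ for $i\in[m-1]$; its length is $m$. A deterministic strategy assigns to each walk whose last state $\sigma$ is flawed a flaw in $F_\sigma$; a walk follows it if each $w_i$ is the flaw assigned to the prefix ending at $\sigma_i$. A set of walks is valid if all its walks follow one common deterministic strategy and no walk in it is a proper prefix (a different initial segment) of another walk in it. *)

(* Defs.v *)
From mathcomp Require Import all_boot all_order all_algebra.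
Set Implicit Arguments. Unset Strict Implicit. Unset Printing Implicit Defensive.
Import Order.TTheory GRing.Theory Num.Theory.
Local Open Scope ring_scope.

(* A walk sigma_1 -w_1-> sigma_2 ... -w_t-> sigma_{t+1} is represented by its
   initial state sigma_1 and the sequence of steps [:: (w_1, sigma_2); ...]. *)
Definition walkT (Omega : finType) := (Omega * seq ({set Omega} * Omega))%type.

Section Defs.
Variable Omega : finType.
Variable F : {set {set Omega}}.
Variable sim : rel {set Omega}.

Definition Fs (sigma : Omega) : {set {set Omega}} := [set f in F | sigma \in f].
Definition Gam (f : {set Omega}) : {set {set Omega}} := [set g in F | sim f g].
Definition Gamp (f : {set Omega}) : {set {set Omega}} := f |: Gam f.
Definition GampS (S : {set {set Omega}}) : {set {set Omega}} :=
  \bigcup_(f in S) Gamp f.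
Definition cong (f g : {set Omega}) : bool := sim f g || (f == g).

Definition lastst (s1 : Omega) (h : seq ({set Omega} * Omega)) : Omega :=
  last s1 [seq p.2 | p <- h].
Definition word (h : seq ({set Omega} * Omega)) : seq {set Omega} :=
  [seq p.1 | p <- h].

Definition is_chain_of (h : seq ({set Omega} * Omega)) (u : seq {set Omega}) :=
  subseq u (word h) /\ sorted cong u.
Definition longest_chain_len (h : seq ({set Omega} * Omega)) (n : nat) :=
  (exists u, is_chain_of h u /\ size u = n) /\
  (forall u, is_chain_of h u -> (size u <= n)%N).

Variable R : realFieldType.
Variable rho : {set Omega} -> Omega -> Omega -> R.  (* rho(sigma' | f, sigma) *)

Definition supp (f : {set Omega}) (sigma : Omega) : {set Omega} :=
  [set s' | 0 < rho f sigma s'].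

Fixpoint walk_from (s : Omega) (h : seq ({set Omega} * Omega)) : bool :=
  match h with
  | [::] => true
  | (f, s') :: h' => [&& f \in Fs s, s' \in supp f s & walk_from s' h']
  end.

Definition is_strategy (strat : Omega -> seq ({set Omega} * Omega) -> {set Omega}) :=
  forall s1 h, walk_from s1 h -> Fs (lastst s1 h) != set0 ->
    strat s1 h \in Fs (lastst s1 h).
Definition follows (strat : Omega -> seq ({set Omega} * Omega) -> {set Omega})
    (s1 : Omega) (h : seq ({set Omega} * Omega)) :=
  forall i, (i < size h)%N -> (nth (set0, s1) h i).1 = strat s1 (take i h).
Definition valid (W : walkT Omega -> Prop) :=
  exists strat, is_strategy strat /\
    (forall tau, W tau -> walk_from tau.1 tau.2 /\ follows strat tau.1 tau.2) /\
    (forall tau1 tau2, W tau1 -> W tau2 -> tau1.1 = tau2.1 ->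
        prefix tau1.2 tau2.2 -> tau1.2 = tau2.2).

(* Algorithm 2.  [rule s1 h I] is the deterministic choice of f made when the
   execution so far is the walk (s1, h) and the current set is I. *)
Variable omega : Omega -> R.
Variable rule : Omega -> seq ({set Omega} * Omega) -> {set {set Omega}} -> {set Omega}.

(* reach s1 h k I b : there is a positive-probability execution prefix whose
   steps form the walk (s1, h), during which k rounds have been started, whose
   current set is I, and b = true iff the last step is the first step of round k. *)
Inductive reach : Omega -> seq ({set Omega} * Omega) -> nat -> {set {set Omega}} -> bool -> Prop :=
| reach_init s1 : 0 < omega s1 -> reach s1 [::] 0 set0 false
| reach_new s1 h k I b f s' :
    reach s1 h k I b ->
    (k == 0)%N || (Fs (lastst s1 h) :\: GampS I == set0) ->
    Fs (lastst s1 h) != set0 ->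
    f = rule s1 h set0 ->
    0 < rho f (lastst s1 h) s' ->
    reach s1 (rcons h (f, s')) k.+1 [set f] true
| reach_inner s1 h k I b f s' :
    reach s1 h k I b ->
    (0 < k)%N ->
    Fs (lastst s1 h) :\: GampS I != set0 ->
    f = rule s1 h I ->
    0 < rho f (lastst s1 h) s' ->
    reach s1 (rcons h (f, s')) k (f |: I) false.

(* BadPar(s): steps of the first s-1 rounds followed by the first step of round s *)
Definition BadPar (s : nat) (tau : walkT Omega) : Prop :=
  exists I, reach tau.1 tau.2 s I true.

End Defs.

(* Main.v *)
Require Import Defs.
From mathcomp Require Import all_boot all_order all_algebra.
Import Order.TTheory GRing.Theory Num.Theory.
Local Open Scope ring_scope.
Set Implicit Arguments. Unset Strict Implicit.

Lemma subseq_rcons2 (T : eqType) (u w : seq T) x :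
  subseq (rcons u x) (rcons w x) = subseq u w.
Proof. by rewrite -!cats1 subseq_cat2r. Qed.

Lemma subseq_rcons_inv (T : eqType) (u w : seq T) x :
  subseq u (rcons w x) -> subseq u w \/ exists u0, u = rcons u0 x /\ subseq u0 w.
Proof.
rewrite -subseq_rev rev_rcons; case/lastP: u => [|u0 y]; first by left; rewrite sub0seq.
rewrite rev_rcons /=; case: eqP => [->|_] H.
  by right; exists u0; split => //; rewrite -subseq_rev.
by left; rewrite -subseq_rev rev_rcons.
Qed.

Lemma subseq_rconsr (T : eqType) (u w : seq T) x : subseq u w -> subseq u (rcons w x).
Proof. move=> H; exact: subseq_trans H (subseq_rcons _ _). Qed.

Lemma sorted_rcons_inv (T : Type) (r : rel T) u x : sorted r (rcons u x) -> sorted r u.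
Proof. by case: u => //= a u; rewrite rcons_path => /andP[]. Qed.

Lemma sorted_rcons2 (T : Type) (r : rel T) u y x :
  sorted r (rcons (rcons u y) x) = sorted r (rcons u y) && r y x.
Proof.
case: u => [|a u] /=; first by rewrite andbT.
by rewrite rcons_path last_rcons.
Qed.

Lemma sorted_rcons1 (T : Type) (r : rel T) x : sorted r [:: x].
Proof. by []. Qed.

Lemma lastst_rcons (Omega : finType) s1 h (x : {set Omega} * Omega) :
  lastst s1 (rcons h x) = x.2.
Proof. by rewrite /lastst map_rcons last_rcons. Qed.

Lemma word_rcons (Omega : finType) h (x : {set Omega} * Omega) :
  word (rcons h x) = rcons (word h) x.1.
Proof. by rewrite /word map_rcons. Qed.

Lemma walk_from_rcons (Omega : finType) F (R : realFieldType) rho s1 h f s' :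
  @walk_from Omega F R rho s1 (rcons h (f, s')) =
  [&& walk_from F rho s1 h, f \in Fs F (lastst s1 h) & s' \in supp rho f (lastst s1 h)].
Proof.
elim: h s1 => [|[f0 s0] h IH] s1 /=; first by rewrite andbT.
by rewrite IH /lastst /= !andbA.
Qed.

Lemma GampS0 (Omega : finType) F sim : @GampS Omega F sim set0 = set0.
Proof. by rewrite /GampS big_set0. Qed.

Lemma GampS1 (Omega : finType) F sim f : @GampS Omega F sim [set f] = Gamp F sim f.
Proof. by rewrite /GampS big_set1. Qed.

Lemma GampSP (Omega : finType) F sim (I : {set {set Omega}}) e :
  reflect (exists2 g, g \in I & e \in Gamp F sim g) (e \in @GampS Omega F sim I).
Proof. exact: bigcupP. Qed.

Lemma gamp_cong (Omega : finType) F sim g e :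
  e \in @Gamp Omega F sim g -> cong sim g e.
Proof.
rewrite /Gamp /cong in_setU1 /Gam inE => /orP[/eqP->|/andP[_ ->]] //.
by rewrite eqxx orbT.
Qed.

Lemma cong_gamp (Omega : finType) (F : {set {set Omega}}) sim g e :
  e \in F -> cong sim g e -> e \in @Gamp Omega F sim g.
Proof.
rewrite /Gamp /cong in_setU1 /Gam inE => eF /orP[->|/eqP->].
  by rewrite eF orbT.
by rewrite eqxx.
Qed.

Section Main.
Context (Omega : finType) (F : {set {set Omega}}) (R : realFieldType)
  (rho : {set Omega} -> Omega -> Omega -> R) (omega : Omega -> R)
  (sim : rel {set Omega})
  (rule : Omega -> seq ({set Omega} * Omega) -> {set {set Omega}} -> {set Omega}).

Notation reach := (reach F sim rho omega rule).
Notation Fs := (Fs F).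
Notation GampS := (GampS F sim).
Notation Gamp := (Gamp F sim).
Notation Gam := (Gam F sim).

Lemma reach_nil s1 k I b : reach s1 [::] k I b -> k = 0%N /\ I = set0.
Proof.
move Eh: [::] => h H; case: H Eh.
- by [].
- by move=> ? ? ? ? ? ? ? ? ? ? ? ? /(congr1 size); rewrite size_rcons.
- by move=> ? ? ? ? ? ? ? ? ? ? ? ? /(congr1 size); rewrite size_rcons.
Qed.

Lemma reach_rcons s1 h x k I b : reach s1 (rcons h x) k I b ->
  exists k0 I0 b0, [/\ reach s1 h k0 I0 b0, 0 < rho x.1 (lastst s1 h) x.2 &
   ([/\ k = k0.+1, I = [set x.1], b = true, x.1 = rule s1 h set0
        & ((k0 == 0)%N || (Fs (lastst s1 h) :\: GampS I0 == set0)) /\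
        Fs (lastst s1 h) != set0] \/
    [/\ k = k0, I = x.1 |: I0, b = false, x.1 = rule s1 h I0 &
        (0 < k0)%N /\ Fs (lastst s1 h) :\: GampS I0 != set0])].
Proof.
move Eh: (rcons h x) => hx H; case: H Eh.
- by move=> ? ? /(congr1 size); rewrite size_rcons.
- move=> s0 h0 k0 I0 b0 f s' H0 c1 c2 c3 c4 /rcons_inj [E1 E2].
  subst; exists k0, I0, b0; split => //; left; split => //.
- move=> s0 h0 k0 I0 b0 f s' H0 c1 c2 c3 c4 /rcons_inj [E1 E2].
  subst; exists k0, I0, b0; split => //; right; split => //.
Qed.

Definition stepf (s1 : Omega) (p : seq ({set Omega} * Omega) * nat * {set {set Omega}})
   (x : {set Omega} * Omega) :=
  let: (hp, k, J) := p in
  let c := (k == 0)%N || (Fs (lastst s1 hp) :\: GampS J == set0) in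
  (rcons hp x, if c then k.+1 else k, if c then [set x.1] else x.1 |: J).

Definition st s1 h := foldl (stepf s1) ([::], 0%N, set0) h.

Lemma reach_st s1 h k I b : reach s1 h k I b -> st s1 h = (h, k, I).
Proof.
elim=> //=.
- move=> s0 h0 k0 I0 b0 f s' _ IH c1 c2 c3 c4.
  by rewrite /st foldl_rcons -/(st _ _) IH /= c1.
- move=> s0 h0 k0 I0 b0 f s' _ IH c1 c2 c3 c4.
  rewrite /st foldl_rcons -/(st _ _) IH /= (negbTE c2) orbF.
  by have /negbTE -> : (k0 != 0)%N by rewrite -lt0n.
Qed.

Definition strat s1 h :=
  let: (_, k, J) := st s1 h in
  if (k == 0)%N || (Fs (lastst s1 h) :\: GampS J == set0) then rule s1 h set0
  else rule s1 h J.

Hypothesis Hstep : forall {sigma f s'}, f \in Fs sigma -> s' \in supp rho f sigma ->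
     Fs s' \subset (Fs sigma :\ f) :|: Gam f.
Hypothesis Hrule : forall {s1 h I},
     Fs (lastst s1 h) :\: GampS I != set0 ->
     rule s1 h I \in Fs (lastst s1 h) :\: GampS I.

Lemma rule0 s1 h : Fs (lastst s1 h) != set0 -> rule s1 h set0 \in Fs (lastst s1 h).
Proof.
move=> H; have := @Hrule s1 h set0; rewrite GampS0 setD0; exact.
Qed.

Lemma strat_ok : is_strategy F rho strat.
Proof.
move=> s1 h _ H; rewrite /strat; case: (st s1 h) => [[_ k] I].
case: ifP => [_|/negbT]; first exact: rule0.
rewrite negb_or => /andP[_ H2]; have := Hrule H2; rewrite inE => /andP[].
by [].
Qed.

Lemma reach_walk s1 h k I b : reach s1 h k I b -> walk_from F rho s1 h.
Proof.
elim=> //.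
- move=> s0 h0 k0 I0 b0 f s' _ IH _ c2 -> c4.
  by rewrite walk_from_rcons IH rule0 //= inE.
- move=> s0 h0 k0 I0 b0 f s' _ IH _ c2 -> c4.
  rewrite walk_from_rcons IH /=; apply/andP; split; last by rewrite inE.
  by have := Hrule c2; rewrite inE => /andP[].
Qed.

Lemma reach_prefix s1 h h' k I b : reach s1 (h ++ h') k I b ->
  exists k0 I0 b0, reach s1 h k0 I0 b0 /\ (k0 + (b && (h' != [::])) <= k)%N.
Proof.
elim/last_ind: h' k I b => [|h' x IH] k I b.
  by rewrite cats0 => H; exists k, I, b; rewrite andbF addn0.
rewrite -rcons_cat => /reach_rcons [k1 [I1 [b1 [H1 _ C]]]].
have [k0 [I0 [b0 [H0 Hk]]]] := IH _ _ _ H1.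
exists k0, I0, b0; split => //.
have Hk' : (k0 <= k1)%N by apply: leq_trans Hk; rewrite leq_addr.
case: C => [[-> _ -> _ _]|[-> _ -> _ _]] /=.
  by rewrite -size_eq0 size_rcons addn1.
by rewrite addn0.
Qed.

Lemma reach_follows s1 h k I b : reach s1 h k I b -> follows strat s1 h.
Proof.
move=> H i Hi; rewrite -(cat_take_drop i.+1 h) (take_nth (set0, s1) Hi) in H.
case/reach_prefix: H => k0 [I0 [b0 [/reach_rcons [k1 [I1 [b1 [H1 _ C]]]] _]]].
rewrite /strat (reach_st H1).
case: C => [[_ _ _ E [c _]]|[_ _ _ E [c1 c2]]]; first by rewrite c.
by rewrite (negbTE c2) orbF; have /negbTE -> : (k1 != 0)%N by rewrite -lt0n.
Qed.

Lemma reach_UB s1 h k I b : reach s1 h k I b ->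
  forall u, subseq u (word h) -> sorted (cong sim) u ->
  (size u <= k)%N /\ (forall u0 g, u = rcons u0 g -> size u = k -> g \in I).
Proof.
elim.
- move=> s0 _ u; rewrite /word /= => /eqP-> _.
  by split => // u0 g /(congr1 size); rewrite size_rcons.
- move=> s0 h0 k0 I0 b0 f s' _ IH _ c2 -> c4 u.
  rewrite word_rcons /= => /subseq_rcons_inv [Hs|[u0 [-> Hs]]] So.
    have [Hk _] := IH u Hs So; split; first by apply: leq_trans Hk _.
    by move=> u0 g _ E; move: Hk; rewrite E ltnn.
  have [Hk _] := IH u0 Hs (sorted_rcons_inv So).
  split; first by rewrite size_rcons.
  by move=> u1 g /rcons_inj [_ ->] _; rewrite inE.
- move=> s0 h0 k0 I0 b0 f s' _ IH c1 c2 -> c4 u.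
  have := Hrule c2; rewrite inE => /andP[nG fF].
  rewrite word_rcons /= => /subseq_rcons_inv [Hs|[u0 [-> Hs]]] So.
    have [Hk Hl] := IH u Hs So; split => // u0 g E Es.
    by rewrite in_setU1 (Hl u0 g E Es) orbT.
  case/lastP: u0 Hs So => [|u1 g] Hs So.
    by split => // u0 g /rcons_inj [_ ->] _; rewrite setU11.
  have [Hk Hl] := IH _ Hs (sorted_rcons_inv So).
  move: So; rewrite sorted_rcons2 => /andP[_ cg].
  have Hlt : (size (rcons u1 g) < k0)%N.
    rewrite ltn_neqAle Hk andbT; apply/negP => /eqP Es.
    have gI := Hl u1 g erefl Es.
    move/negP: nG; apply; apply/GampSP; exists g => //.
    by apply: cong_gamp => //; move: fF; rewrite inE => /andP[].
  split; first by rewrite size_rcons.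
  by move=> u0 g' /rcons_inj [_ ->] _; rewrite setU11.
Qed.

Lemma reach_LB s1 h k I b : reach s1 h k I b ->
  (forall g, g \in I -> exists u, [/\ subseq (rcons u g) (word h),
       sorted (cong sim) (rcons u g) & size u = k.-1]) /\
  (forall e, e \in Fs (lastst s1 h) :\: GampS I -> exists u, [/\ subseq u (word h),
       sorted (cong sim) (rcons u e) & size u = k.-1]).
Proof.
elim.
- move=> s0 _; split => [g|e _]; first by rewrite inE.
  by exists [::]; split => //; rewrite sub0seq.
- move=> s0 h0 k0 I0 b0 f s' _ [IH1 IH2] c1 c2 Ef c4.
  have fF : f \in Fs (lastst s0 h0) by rewrite Ef; exact: rule0 c2.
  have key : forall e, e \in Fs (lastst s0 h0) -> exists u, [/\ subseq u (word h0),
       sorted (cong sim) (rcons u e) & size u = k0].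
    move=> e eF; case: k0 IH1 IH2 c1 => [|k0] IH1 IH2 c1.
      by exists [::]; split => //; rewrite sub0seq.
    move: c1 => /= /eqP/setP/(_ e); rewrite in_setD in_set0 eF andbT => /negbFE /GampSP [g gI eg].
    have [u [Hs So Hz]] := IH1 g gI.
    exists (rcons u g); split => //; last by rewrite size_rcons Hz.
    by rewrite sorted_rcons2 So (gamp_cong eg).
  split.
    move=> g; rewrite inE => /eqP ->.
    have [u [Hs So Hz]] := key _ fF.
    by exists u; split => //; rewrite word_rcons subseq_rcons2.
  move=> e; rewrite GampS1 lastst_rcons in_setD => /andP [nG eF].
  have Hsp : s' \in supp rho f (lastst s0 h0) by rewrite inE.
  have := subsetP (Hstep fF Hsp) e eF.
  rewrite in_setU in_setD1 => /orP[/andP[_ eF0]|eG].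
    have [u [Hs So Hz]] := key _ eF0.
    by exists u; split => //; rewrite word_rcons subseq_rconsr.
  by move: nG; rewrite /Gamp in_setU1 eG orbT.
- move=> s0 h0 k0 I0 b0 f s' _ [IH1 IH2] c1 c2 Ef c4.
  have fFG : f \in Fs (lastst s0 h0) :\: GampS I0 by rewrite Ef; exact: Hrule c2.
  have fF : f \in Fs (lastst s0 h0) by move: fFG; rewrite in_setD => /andP[].
  split.
    move=> g; rewrite in_setU1 => /orP[/eqP->|gI].
      have [u [Hs So Hz]] := IH2 _ fFG.
      by exists u; split => //; rewrite word_rcons subseq_rcons2.
    have [u [Hs So Hz]] := IH1 _ gI.
    by exists u; split => //; rewrite word_rcons subseq_rconsr.
  move=> e; rewrite lastst_rcons in_setD => /andP [nG eF].
  have nG1 : e \notin Gamp f.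
    apply: contra nG => H; apply/GampSP; exists f => //; exact: setU11.
  have nG2 : e \notin GampS I0.
    apply: contra nG => /GampSP [g gI H]; apply/GampSP; exists g => //.
    by rewrite in_setU1 gI orbT.
  have Hsp : s' \in supp rho f (lastst s0 h0) by rewrite inE.
  have := subsetP (Hstep fF Hsp) e eF.
  rewrite in_setU in_setD1 => /orP[/andP[_ eF0]|eG].
    have eI : e \in Fs (lastst s0 h0) :\: GampS I0 by rewrite in_setD nG2 eF0.
    have [u [Hs So Hz]] := IH2 e eI.
    by exists u; split => //; rewrite word_rcons subseq_rconsr.
  by move: nG1; rewrite /Gamp in_setU1 eG orbT.
Qed.

Lemma reach_ne s1 h k I b : reach s1 h k I b -> (0 < k)%N -> exists g, g \in I.
Proof.
case=> //.
- by move=> ? ? ? ? ? f *; exists f; rewrite inE.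
- by move=> ? ? ? ? ? f *; exists f; rewrite setU11.
Qed.

End Main.

Theorem proposition4 (Omega : finType) (F : {set {set Omega}})
  (R : realFieldType) (rho : {set Omega} -> Omega -> Omega -> R)
  (omega : Omega -> R) (sim : rel {set Omega})
  (rule : Omega -> seq ({set Omega} * Omega) -> {set {set Omega}} -> {set Omega})
  (s : nat) :
  (* flaws are nonempty *)
  (forall f, f \in F -> f != set0) ->
  (* rho(. | f, sigma) is a probability distribution for f in F_sigma *)
  (forall sigma f, f \in Fs F sigma ->
     (forall s', 0 <= rho f sigma s') /\ \sum_(s' : Omega) rho f sigma s' = 1) ->
  (* initial distribution *)
  (forall sigma, 0 <= omega sigma) -> \sum_(sigma : Omega) omega sigma = 1 ->
  (* ~ is symmetric on F *)
  {in F &, forall f g, sim f g = sim g f} ->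
  (* F_sigma' \subseteq (F_sigma \ {f}) u Gamma(f) for every step *)
  (forall sigma f s', f \in Fs F sigma -> s' \in supp rho f sigma ->
     Fs F s' \subset (Fs F sigma :\ f) :|: Gam F sim f) ->
  (* the deterministic rule picks f in F_sigma \ Gamma^+(I) *)
  (forall s1 h I,
     Fs F (lastst s1 h) :\: GampS F sim I != set0 ->
     rule s1 h I \in Fs F (lastst s1 h) :\: GampS F sim I) ->
  (1 <= s)%N ->
  (forall tau, BadPar F sim rho omega rule s tau -> longest_chain_len sim tau.2 s)
  /\ valid F rho (BadPar F sim rho omega rule s).
Proof.
move=> _ _ _ _ _ Hstep Hrule s1.
split.
  move=> [t1 t2] [I /= H]; split.
    have := reach_ne H s1; case=> g gI.
    have [L1 _] := reach_LB Hstep Hrule H.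
    have [u [Hs So Hz]] := L1 g gI.
    by exists (rcons u g); split => //; rewrite size_rcons Hz prednK.
  by move=> u [Hs So]; have [] := reach_UB Hrule H Hs So.
exists (strat F sim rule); split; first exact: strat_ok.
split.
  move=> [t1 t2] [I /= H]; split; first exact: reach_walk H.
  exact: reach_follows H.
move=> [a1 h1] [a2 h2] [I1 /= H1] [I2 /= H2] /= E; subst a2.
case/prefixP => h' E; subst h2.
have [k0 [I0 [b0 [H0 Hk]]]] := reach_prefix H2.
have := reach_st H0; rewrite (reach_st H1) => -[E1 _]; subst k0.
move: Hk; case: eqP => [->|_]; first by rewrite cats0.
by rewrite /= addn1 ltnn.
Qed.
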